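(* Let $N\ge1$ and let $\xi_1<\dots<\xi_{N+1}$ be nodes in $[-1,1]$ with positive weights $w_1,\dots,w_{N+1}$ such that $\sum_i w_if(\xi_i)=\int_{-1}^1f\,d\xi$ for every polynomial $f$ of degree $\le 2N-1$ (e.g. Gauss–Lobatto–Legendre or Gauss–Legendre nodes). Let $\mathcal L_1,\dots,\mathcal L_{N+1}$ be the Lagrange polynomials of degree $N$ with $\mathcal L_j(\xi_i)=\delta_{ij}$. Define $(N+1)\times(N+1)$ matrices $W^N(a)=\mathrm{diag}(w_ja_j)$ for a vector $a=(a_j)$ of nodal values, $Q^N_{ij}=\sum_m w_m\mathcal L_i(\xi_m)\mathcal L_j'(\xi_m)$, and vectors $\boldsymbol e_1=(\mathcal L_j(-1))_j$, $\boldsymbol e_{N+1}=(\mathcal L_j(1))_j$. Partition $[0,L]$ into elements $[x_k,x_{k+1}]$, $k=1,\dots,K$, with $\Delta x_k=x_{k+1}-x_k>0$. On element $k$ let $\rho^k(\xi)=\sum_j\rho^k_j\mathcal L_j(\xi)$, $\mu^k(\xi)=\sum_j\mu^k_j\mathcal L_j(\xi)$ with $\rho^k_j,\mu^k_j>0$ and $\rho^k(\pm1),\mu^k(\pm1)>0$, and set $Z_s^k(\pm1)=\sqrt{\rho^k(\pm1)\mu^k(\pm1)}$. For unknowns $\boldsymbol v^k(t),\boldsymbol\sigma^k(t)\in\mathbb R^{N+1}$ let $v^k(\xi,t)=\sum_jv^k_j(t)\mathcal L_j(\xi)$, $\sigma^k(\xi,t)=\sum_j\sigma^k_j(t)\mathcal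 L_j(\xi)$. Fix $r_0,r_L\in[-1,1]$ and, for each interior interface between elements $k-1$ and $k$ ($2\le k\le K$), $\alpha^k\in[0,\infty]$. Define hat-variables: (i) left boundary of element $1$: $p_0=\frac12(Z_s^1(-1)v^1(-1,t)+\sigma^1(-1,t))$, $\widehat v^1(-1)=\frac{1+r_0}{Z_s^1(-1)}p_0$, $\widehat\sigma^1(-1)=(1-r_0)p_0$; (ii) right boundary of element $K$: $q_L=\frac12(Z_s^K(1)v^K(1,t)-\sigma^K(1,t))$, $\widehat v^K(1)=\frac{1+r_L}{Z_s^K(1)}q_L$, $\widehat\sigma^K(1)=-(1-r_L)q_L$; (iii) interface between elements $k-1$ and $k$: with $Z^-=Z_s^{k-1}(1)$, $Z^+=Z_s^k(-1)$, $q^-=\frac12(Z^-v^{k-1}(1,t)-\sigma^{k-1}(1,t))$, $p^+=\frac12(Z^+v^k(-1,t)+\sigma^k(-1,t))$, $\eta^k=\frac{Z^-Z^+}{Z^-+Z^+}$, $\Phi^k=\eta^k(\frac2{Z^+}p^+-\frac2{Z^-}q^-)$, set $\widehat\sigma^k=\frac{\alpha^k}{\eta^k+\alpha^k}\Phi^k$ ($=\Phi^k$ if $\alpha^k=\infty$), $\widehat\sigma^{k-1}(1)=\widehat\sigma^k(-1)=\widehat\sigma^k$, $\widehat v^{k-1}(1)=\frac{2q^-+\widehat\sigma^k}{Z^-}$, $\widehat v^k(-1)=\frac{2p^+-\widehat\sigma^k}{Z^+}$. Let $F^k(-1,t)=\frac{Z_s^k(-1)}{2}(v^k(-1,t)-\widehat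 v^k(-1))-\frac12(\sigma^k(-1,t)-\widehat\sigma^k(-1))$ and $G^k(1,t)=\frac{Z_s^k(1)}{2}(v^k(1,t)-\widehat v^k(1))+\frac12(\sigma^k(1,t)-\widehat\sigma^k(1))$. Suppose $(\boldsymbol v^k,\boldsymbol\sigma^k)_{k=1}^K$ are differentiable and satisfy, for all $k$, $$\frac{\Delta x_k}{2}W^N(\rho^k)\frac{d\boldsymbol v^k}{dt}=Q^N\boldsymbol\sigma^k-\boldsymbol e_1F^k(-1,t)-\boldsymbol e_{N+1}G^k(1,t),$$ $$\frac{\Delta x_k}{2}W^N(1/\mu^k)\frac{d\boldsymbol\sigma^k}{dt}=Q^N\boldsymbol v^k+\boldsymbol e_1\frac{F^k(-1,t)}{Z_s^k(-1)}-\boldsymbol e_{N+1}\frac{G^k(1,t)}{Z_s^k(1)},$$ where $W^N(\rho^k)=\mathrm{diag}(w_j\rho^k_j)$ and $W^N(1/\mu^k)=\mathrm{diag}(w_j/\mu^k_j)$. Define $\mathcal E(t)=\sum_{k=1}^K\frac{\Delta x_k}{2}\sum_{j=1}^{N+1}\frac{w_j}{2}\big(\rho^k_j|v^k_j|^2+\frac{1}{\mu^k_j}|\sigma^k_j|^2\big)$. Then $$\frac{d\mathcal E}{dt}=-\sum_{k=1}^K\Big(\frac{|F^k(-1,t)|^2}{Z_s^k(-1)}+\frac{|G^k(1,t)|^2}{Z_s^k(1)}\Big)-\sum_{k=2}^K\frac{\alpha^k}{(\eta^k+\alpha^k)^2}|\Phi^k|^2-\frac{1-r_0^2}{Z_s^1(-1)}p_0^2-\frac{1-r_L^2}{Z_s^K(1)}q_L^2,$$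 where the $k$-th friction term is $0$ when $\alpha^k=\infty$. In particular $\frac{d\mathcal E}{dt}\le0$ for every mesh (asymptotic stability).
   Context: This is the nodal discontinuous Galerkin semi-discretization of the 1D elastic wave equation $\rho\partial_tv=\partial_x\sigma$, $\frac1\mu\partial_t\sigma=\partial_xv$ on $[0,L]$, each element mapped to $[-1,1]$ by $x=x_k+\frac{\Delta x_k}{2}(1+\xi)$. Element faces are coupled through frictional interface conditions (force balance plus $\widehat\sigma=\alpha[\![\widehat v]\!]$, $\alpha=\infty$ meaning a locked interface) and the external boundaries through $\frac{Z_s}{2}(1-r)v\mp\frac{1+r}{2}\sigma=0$ with reflection coefficients $r_0$ (at $x=0$) and $r_L$ (at $x=L$). The hat-variables are computed from the polynomial traces at $\xi=\pm1$. *)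

(* Defs.v *)
From Stdlib Require Import Reals Lra Lia Arith.
Open Scope R_scope.

Fixpoint sumR (n : nat) (f : nat -> R) : R :=
  match n with O => 0 | S n' => sumR n' f + f n' end.

Fixpoint prodR (n : nat) (f : nat -> R) : R :=
  match n with O => 1 | S n' => prodR n' f * f n' end.

(* Nodes are indexed 0..N (the paper's 1..N+1); elements 0..K-1 (paper's 1..K). *)

Definition lag (xi : nat -> R) (N j : nat) (x : R) : R :=
  prodR (S N) (fun m => if Nat.eqb m j then 1 else (x - xi m) / (xi j - xi m)).

Definition interp (xi : nat -> R) (N : nat) (c : nat -> R) (x : R) : R :=
  sumR (S N) (fun j => c j * lag xi N j x).

(* Q^N_{ij} = sum_m w_m L_i(xi_m) L_j'(xi_m), with Lp j the derivative of L_j *)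
Definition QN (xi w : nat -> R) (N : nat) (Lp : nat -> R -> R) (i j : nat) : R :=
  sumR (S N) (fun m => w m * lag xi N i (xi m) * Lp j (xi m)).

(* Interface friction parameter alpha in [0, infinity]: None = infinity (locked). *)

Section Fluxes.
Variables (xi : nat -> R) (N K : nat) (rho mu : nat -> nat -> R)
          (r0 rL : R) (alpha : nat -> option R).
(* State at a fixed time: V k j = v^k_j(t), S k j = sigma^k_j(t). *)
Variables (V Sg : nat -> nat -> R).

Definition Zs (k : nat) (s : R) : R :=
  sqrt (interp xi N (rho k) s * interp xi N (mu k) s).

Definition vtr (k : nat) (s : R) : R := interp xi N (V k) s.
Definition str (k : nat) (s : R) : R := interp xi N (Sg k) s.

Definition p0 : R := / 2 * (Zs 0 (-1) * vtr 0 (-1) + str 0 (-1)).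
Definition qL : R := / 2 * (Zs (K - 1) 1 * vtr (K - 1) 1 - str (K - 1) 1).

(* interface k, between elements k-1 and k (1 <= k <= K-1) *)
Definition Zm (k : nat) : R := Zs (k - 1) 1.
Definition Zp (k : nat) : R := Zs k (-1).
Definition qm (k : nat) : R := / 2 * (Zm k * vtr (k - 1) 1 - str (k - 1) 1).
Definition pp (k : nat) : R := / 2 * (Zp k * vtr k (-1) + str k (-1)).
Definition eta (k : nat) : R := Zm k * Zp k / (Zm k + Zp k).
Definition Phi (k : nat) : R := eta k * (2 / Zp k * pp k - 2 / Zm k * qm k).
Definition sighat (k : nat) : R :=
  match alpha k with Some a => a / (eta k + a) * Phi k | None => Phi k end.
Definition fric (k : nat) : R :=
  match alpha k with Some a => a / (eta k + a) ^ 2 * (Phi k) ^ 2 | None => 0 end.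

(* hat variables at xi = -1 (L) and xi = 1 (R) of element k *)
Definition vhatL (k : nat) : R :=
  if Nat.eqb k 0 then (1 + r0) / Zs 0 (-1) * p0
  else (2 * pp k - sighat k) / Zp k.
Definition shatL (k : nat) : R :=
  if Nat.eqb k 0 then (1 - r0) * p0 else sighat k.
Definition vhatR (k : nat) : R :=
  if Nat.eqb k (K - 1) then (1 + rL) / Zs (K - 1) 1 * qL
  else (2 * qm (S k) + sighat (S k)) / Zm (S k).
Definition shatR (k : nat) : R :=
  if Nat.eqb k (K - 1) then - ((1 - rL) * qL) else sighat (S k).

Definition Fm (k : nat) : R :=
  Zs k (-1) / 2 * (vtr k (-1) - vhatL k) - / 2 * (str k (-1) - shatL k).
Definition Gp (k : nat) : R :=
  Zs k 1 / 2 * (vtr k 1 - vhatR k) + / 2 * (str k 1 - shatR k).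

End Fluxes.

Definition energy (N K : nat) (w x : nat -> R) (rho mu : nat -> nat -> R)
  (V Sg : nat -> nat -> R) : R :=
  sumR K (fun k => (x (S k) - x k) / 2 *
    sumR (S N) (fun j => w j / 2 *
      (rho k j * (V k j) ^ 2 + / mu k j * (Sg k j) ^ 2))).

(* Main.v *)
Require Import Defs.
From Stdlib Require Import Reals Lra Lia FunctionalExtensionality.
From Coquelicot Require Coquelicot.
Open Scope R_scope.

Lemma sumR_ext_lt n f g : (forall i, (i < n)%nat -> f i = g i) -> sumR n f = sumR n g.
Proof. induction n; simpl; intros H; [reflexivity|]. rewrite IHn by (intros; apply H; lia). rewrite H by lia. reflexivity. Qed.

Lemma sumR_plus n f g : sumR n (fun i => f i + g i) = sumR n f + sumR n g.
Proof. induction n; simpl; [ring|]. rewrite IHn; ring. Qed.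

Lemma sumR_scal n c f : c * sumR n f = sumR n (fun i => c * f i).
Proof. induction n; simpl; [ring|]. rewrite <- IHn; ring. Qed.

Lemma sumR_swap n m (f : nat -> nat -> R) :
  sumR n (fun i => sumR m (fun j => f i j)) = sumR m (fun j => sumR n (fun i => f i j)).
Proof. induction n; simpl.
- induction m; simpl; [reflexivity|]. rewrite <- IHm; ring.
- rewrite IHn. rewrite <- sumR_plus. reflexivity. Qed.

Lemma sumR_prod n m f g : sumR n f * sumR m g = sumR n (fun i => sumR m (fun j => f i * g j)).
Proof. rewrite Rmult_comm, sumR_scal. apply sumR_ext_lt; intros.
rewrite Rmult_comm, sumR_scal. reflexivity. Qed.

Lemma sumR_shift n g : sumR (S n) g = g 0%nat + sumR n (fun m => g (S m)).
Proof. induction n; simpl in *; [ring|]. rewrite IHn; ring. Qed.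

Lemma sumR_nonneg n f : (forall i, (i < n)%nat -> 0 <= f i) -> 0 <= sumR n f.
Proof. induction n; simpl; intros H; [lra|]. assert (0 <= f n) by (apply H; lia).
assert (0 <= sumR n f) by (apply IHn; intros; apply H; lia). lra. Qed.

Lemma sumR_LR K (L R0 : nat -> R) : (1 <= K)%nat ->
  sumR K (fun k => L k + R0 k) =
  L 0%nat + sumR (K - 1) (fun k => R0 k + L (S k)) + R0 (K - 1)%nat.
Proof. intros HK. destruct K as [|K]; [lia|]. clear HK. replace (S K - 1)%nat with K by lia.
induction K; simpl; [ring|]. simpl in IHK. rewrite IHK. ring. Qed.

Lemma dl_ext f g x l : (forall y, f y = g y) -> derivable_pt_lim g x l -> derivable_pt_lim f x l.
Proof. intros H; replace f with g; [auto|]. apply functional_extensionality; intros; auto. Qed.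

Lemma dl_plus f g x l1 l2 : derivable_pt_lim f x l1 -> derivable_pt_lim g x l2 ->
  derivable_pt_lim (fun y => f y + g y) x (l1 + l2).
Proof. apply derivable_pt_lim_plus. Qed.

Lemma dl_mult f g x l1 l2 : derivable_pt_lim f x l1 -> derivable_pt_lim g x l2 ->
  derivable_pt_lim (fun y => f y * g y) x (l1 * g x + f x * l2).
Proof. apply derivable_pt_lim_mult. Qed.

Lemma dl_scal c f x l : derivable_pt_lim f x l -> derivable_pt_lim (fun y => c * f y) x (c * l).
Proof. apply derivable_pt_lim_scal. Qed.

Lemma dl_const c x : derivable_pt_lim (fun _ => c) x 0.
Proof. apply derivable_pt_lim_const. Qed.

Lemma dl_sq f x l : derivable_pt_lim f x l -> derivable_pt_lim (fun y => f y ^ 2) x (2 * f x * l).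
Proof. intros H. eapply dl_ext. { intros y. simpl. rewrite Rmult_1_r. reflexivity. }
replace (2 * f x * l) with (l * f x + f x * l) by ring. apply dl_mult; auto. Qed.

Lemma dl_sum n (f : nat -> R -> R) df x : (forall k, (k < n)%nat -> derivable_pt_lim (f k) x (df k)) ->
  derivable_pt_lim (fun y => sumR n (fun k => f k y)) x (sumR n df).
Proof. induction n; simpl; intros H. apply dl_const.
apply dl_plus. apply IHn; intros; apply H; lia. apply H; lia. Qed.

Fixpoint Pol (n : nat) (f : R -> R) : Prop :=
  match n with O => forall s, f s = 0
  | S n' => exists c h, Pol n' h /\ forall s, f s = c + s * h s end.

Lemma Pol_ext n f g : (forall s, f s = g s) -> Pol n f -> Pol n g.
Proof. intros H; replace g with f; auto. apply functional_extensionality; auto. Qed.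

Lemma Pol_0 n : Pol n (fun _ => 0).
Proof. induction n; simpl; auto. exists 0, (fun _ => 0); split; auto; intros; ring. Qed.

Lemma Pol_const n c : Pol (S n) (fun _ => c).
Proof. exists c, (fun _ => 0); split; [apply Pol_0|intros; ring]. Qed.

Lemma Pol_plus n f g : Pol n f -> Pol n g -> Pol n (fun s => f s + g s).
Proof. revert f g; induction n; simpl; intros f g Hf Hg.
- intros; rewrite Hf, Hg; ring.
- destruct Hf as [c [h [Hh Hf]]]; destruct Hg as [d [k [Hk Hg]]].
  exists (c + d), (fun s => h s + k s); split; [auto|]. intros; rewrite Hf, Hg; ring. Qed.

Lemma Pol_scal n a f : Pol n f -> Pol n (fun s => a * f s).
Proof. revert f; induction n; simpl; intros f Hf.
- intros; rewrite Hf; ring.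
- destruct Hf as [c [h [Hh Hf]]]. exists (a * c), (fun s => a * h s); split; auto.
  intros; rewrite Hf; ring. Qed.

Lemma Pol_mono n f : Pol n f -> Pol (S n) f.
Proof. revert f; induction n; intros f Hf.
- exists 0, (fun _ => 0); split; [apply Pol_0|]. intros; simpl in Hf; rewrite Hf; ring.
- destruct Hf as [c [h [Hh Hf]]]. exists c, h; split; auto. Qed.

Lemma Pol_le n m f : (n <= m)%nat -> Pol n f -> Pol m f.
Proof. induction 1; auto. intros; apply Pol_mono; auto. Qed.

Lemma Pol_shift n h : Pol n h -> Pol (S n) (fun s => s * h s).
Proof. intros; exists 0, h; split; auto; intros; ring. Qed.

Lemma Pol_mult n m f g : Pol (S n) f -> Pol m g -> Pol (n + m) (fun s => f s * g s).
Proof. revert f; induction n; intros f Hf Hg; destruct Hf as [c [h [Hh Hf]]].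
- simpl. eapply Pol_ext; [|apply (Pol_scal _ c _ Hg)]. intros s; simpl.
  rewrite Hf; simpl in Hh; rewrite Hh; ring.
- eapply Pol_ext; [| apply (Pol_plus _ _ _ (Pol_le m (S n + m) _ ltac:(lia) (Pol_scal _ c _ Hg))
     (Pol_shift _ _ (IHn _ Hh Hg)))].
  intros s; simpl. rewrite Hf; ring. Qed.

Lemma Pol_sum n m (f : nat -> R -> R) : (forall k, (k < m)%nat -> Pol n (f k)) ->
  Pol n (fun s => sumR m (fun k => f k s)).
Proof. induction m; simpl; intros H. apply Pol_0.
apply Pol_plus. apply IHm; intros; apply H; lia. apply H; lia. Qed.

Lemma Pol_deriv n f : Pol (S n) f -> exists df, Pol n df /\ forall s, derivable_pt_lim f s (df s).
Proof. revert f; induction n; intros f [c [h [Hh Hf]]].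
- exists (fun _ => 0); split. simpl; auto. intros s.
  apply (dl_ext _ (fun _ => c)). intros y; rewrite Hf; simpl in Hh; rewrite Hh; ring.
  apply dl_const.
- destruct (IHn h Hh) as [dh [Hdh Hd]].
  exists (fun s => h s + s * dh s); split.
  + apply Pol_plus; auto. apply Pol_shift; auto.
  + intros s. eapply dl_ext. { intros y. apply Hf. }
    replace (h s + s * dh s) with (0 + (1 * h s + s * dh s)) by ring.
    apply dl_plus. apply dl_const. apply dl_mult; auto. apply derivable_pt_lim_id. Qed.

Lemma Pol_coef n f : Pol n f -> exists c, forall s, f s = sumR n (fun m => c m * s ^ m).
Proof. revert f; induction n; intros f Hf.
- exists (fun _ => 0); intros; simpl in *; auto.
- destruct Hf as [c0 [h [Hh Hf]]]. destruct (IHn h Hh) as [d Hd].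
  exists (fun m => match m with O => c0 | S m' => d m' end). intros s.
  rewrite sumR_shift, Hf, Hd, sumR_scal. simpl. f_equal. ring.
  apply sumR_ext_lt; intros; ring. Qed.

Lemma Pol_prod2 m (f : nat -> R -> R) :
  (forall k, (k < m)%nat -> Pol 2 (f k)) -> Pol (S m) (fun s => prodR m (fun k => f k s)).
Proof. induction m; intros H2. apply (Pol_const 0 1).
change (Pol (S (S m)) (fun s => prodR m (fun k => f k s) * f m s)).
replace (S (S m)) with (m + 2)%nat by lia. apply Pol_mult. apply IHm; intros; apply H2; lia.
apply H2; lia. Qed.

Lemma Pol_prod m (f : nat -> R -> R) j : (j < m)%nat -> Pol 1 (f j) ->
  (forall k, (k < m)%nat -> Pol 2 (f k)) -> Pol m (fun s => prodR m (fun k => f k s)).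
Proof. induction m; intros Hj H1 H2; [lia|].
change (Pol (S m) (fun s => prodR m (fun k => f k s) * f m s)).
destruct (Nat.eq_dec j m) as [->|Hne].
- replace (S m) with (m + 1)%nat by lia. apply Pol_mult; auto.
  apply Pol_prod2; intros; apply H2; lia.
- destruct m as [|m']; [lia|].
  replace (S (S m')) with (m' + 2)%nat by lia. apply Pol_mult.
  apply IHm; auto; try lia. intros; apply H2; lia.
Qed.

Lemma lag_pol (xi : nat -> R) N j : (j <= N)%nat -> Pol (S N) (lag xi N j).
Proof. intros Hj. unfold lag.
apply (Pol_prod (S N) (fun m s => if Nat.eqb m j then 1 else (s - xi m) / (xi j - xi m)) j).
- lia.
- rewrite Nat.eqb_refl. apply (Pol_const 0 1).
- intros k _. destruct (Nat.eqb k j). apply (Pol_const 1 1).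
  exists (- xi k / (xi j - xi k)), (fun _ => / (xi j - xi k)). split. apply (Pol_const 0).
  intros s; unfold Rdiv; ring.
Qed.

Lemma Lp_pol (xi : nat -> R) N (Lp : nat -> R -> R) j : (forall j s, derivable_pt_lim (lag xi N j) s (Lp j s)) ->
  (j <= N)%nat -> Pol N (Lp j).
Proof. intros HL Hj. destruct (Pol_deriv _ _ (lag_pol xi N j Hj)) as [df [Hdf Hd]].
apply (Pol_ext _ df); auto. intros s; apply (uniqueness_limite (lag xi N j) s); auto. Qed.

Lemma interp_pol (xi a : nat -> R) N : Pol (S N) (interp xi N a).
Proof. unfold interp. apply (Pol_sum (S N) (S N) (fun j x => a j * lag xi N j x)).
intros; apply Pol_scal; apply lag_pol; lia. Qed.

Lemma interp_deriv (xi a : nat -> R) N (Lp : nat -> R -> R) : (forall j s, derivable_pt_lim (lag xi N j) s (Lp j s)) ->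
  forall s, derivable_pt_lim (interp xi N a) s (sumR (S N) (fun i => a i * Lp i s)).
Proof. intros HL s. unfold interp.
apply (dl_sum (S N) (fun k y => a k * lag xi N k y) (fun i => a i * Lp i s)).
intros; apply dl_scal; auto. Qed.

Lemma interpd_pol (xi a : nat -> R) N (Lp : nat -> R -> R) : (forall j s, derivable_pt_lim (lag xi N j) s (Lp j s)) ->
  Pol N (fun s => sumR (S N) (fun i => a i * Lp i s)).
Proof. intros HL. apply (Pol_sum N (S N) (fun i s => a i * Lp i s)).
intros; apply Pol_scal; apply (Lp_pol xi); auto; lia. Qed.

Module FTCm.
Import Coquelicot.Coquelicot.
Lemma ftc (g dg : R -> R) (pr : Riemann_integrable dg (-1) 1) :
  (forall s, derivable_pt_lim g s (dg s)) -> (forall s, exists l, derivable_pt_lim dg s l) ->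
  RiemannInt pr = g 1 - g (-1).
Proof. intros H1 H2. rewrite <- RInt_Reals. apply (is_RInt_unique dg (-1) 1).
apply (is_RInt_derive g dg). intros; apply is_derive_Reals; auto.
intros x _. destruct (H2 x) as [l Hl]. apply continuity_pt_filterlim.
apply derivable_continuous_pt. exists l. apply Hl. Qed.
End FTCm.
Notation ftc := FTCm.ftc.

Lemma pol_cont n f : Pol n f -> forall x, continuity_pt f x.
Proof. intros Hf x. destruct (Pol_deriv _ _ (Pol_mono _ _ Hf)) as [df [_ Hd]].
apply derivable_continuous_pt. exists (df x). apply Hd. Qed.

Lemma qform (xi w a b : nat -> R) N (Lp : nat -> R -> R) :
  sumR (S N) (fun j => a j * sumR (S N) (fun i => QN xi w N Lp j i * b i)) =
  sumR (S N) (fun m => w m * (interp xi N a (xi m) * sumR (S N) (fun i => b i * Lp i (xi m)))).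
Proof. unfold QN, interp.
transitivity (sumR (S N) (fun j => sumR (S N) (fun i => sumR (S N) (fun m =>
   a j * b i * w m * lag xi N j (xi m) * Lp i (xi m))))).
{ apply sumR_ext_lt; intros j _. rewrite sumR_scal. apply sumR_ext_lt; intros i _.
  match goal with |- ?x * (sumR ?n ?F * ?y) = _ => transitivity ((x*y) * sumR n F); [ring|rewrite sumR_scal] end.
  apply sumR_ext_lt; intros; ring. }
transitivity (sumR (S N) (fun j => sumR (S N) (fun m => sumR (S N) (fun i =>
   a j * b i * w m * lag xi N j (xi m) * Lp i (xi m))))).
{ apply sumR_ext_lt; intros j _. apply sumR_swap. }
rewrite sumR_swap. apply sumR_ext_lt; intros m _.
rewrite sumR_prod, sumR_scal. apply sumR_ext_lt; intros j _.
rewrite sumR_scal. apply sumR_ext_lt; intros; ring. Qed.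

Lemma sbp (xi w : nat -> R) N (Lp : nat -> R -> R) (HN : (1 <= N)%nat)
  (Hq : forall (c : nat -> R) (f : R -> R) (pr : Riemann_integrable f (-1) 1),
     (forall s, f s = sumR (2 * N) (fun m => c m * s ^ m)) ->
     sumR (S N) (fun i => w i * f (xi i)) = RiemannInt pr)
  (HL : forall j s, derivable_pt_lim (lag xi N j) s (Lp j s)) (a b : nat -> R) :
  sumR (S N) (fun j => a j * sumR (S N) (fun i => QN xi w N Lp j i * b i)) +
  sumR (S N) (fun j => b j * sumR (S N) (fun i => QN xi w N Lp j i * a i)) =
  interp xi N a 1 * interp xi N b 1 - interp xi N a (-1) * interp xi N b (-1).
Proof.
rewrite !qform, <- sumR_plus.
set (A := interp xi N a). set (B := interp xi N b).
set (A' := fun s => sumR (S N) (fun i => a i * Lp i s)).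
set (B' := fun s => sumR (S N) (fun i => b i * Lp i s)).
set (f := fun s => A s * B' s + B s * A' s).
assert (Hf : Pol (N + N) f).
{ apply Pol_plus; apply Pol_mult; try apply interp_pol; apply (interpd_pol xi); auto. }
assert (Hcont : forall x, -1 <= x <= 1 -> continuity_pt f x) by (intros; eapply pol_cont; eauto).
pose (pr := @continuity_implies_RiemannInt f (-1) 1 ltac:(lra) Hcont).
destruct (Pol_coef _ _ Hf) as [c Hc].
transitivity (sumR (S N) (fun i => w i * f (xi i))).
{ apply sumR_ext_lt; intros; unfold f, A', B'; ring. }
rewrite (Hq c f pr). 2:{ replace (2 * N)%nat with (N + N)%nat by lia. exact Hc. }
apply (ftc (fun s => A s * B s)).
- intros s. replace (f s) with (A' s * B s + A s * B' s) by (unfold f; ring).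
  apply dl_mult; apply (interp_deriv xi); auto.
- intros s. destruct (Pol_deriv _ _ (Pol_mono _ _ Hf)) as [df [_ Hd]]. eauto.
Qed.

Section Alg.
Variables (xi : nat -> R) (N K : nat) (rho mu : nat -> nat -> R)
          (r0 rL : R) (alpha : nat -> option R) (V Sg : nat -> nat -> R).

Definition LB k := - vtr xi N V k (-1) * str xi N Sg k (-1)
  - vtr xi N V k (-1) * Fm xi N rho mu r0 alpha V Sg k
  + str xi N Sg k (-1) * (Fm xi N rho mu r0 alpha V Sg k / Zs xi N rho mu k (-1)).
Definition RB k := vtr xi N V k 1 * str xi N Sg k 1
  - vtr xi N V k 1 * Gp xi N K rho mu rL alpha V Sg k
  - str xi N Sg k 1 * (Gp xi N K rho mu rL alpha V Sg k / Zs xi N rho mu k 1).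

Lemma left_bnd : 0 < Zs xi N rho mu 0 (-1) ->
  LB 0 = - ((Fm xi N rho mu r0 alpha V Sg 0) ^ 2 / Zs xi N rho mu 0 (-1))
     - (1 - r0 ^ 2) / Zs xi N rho mu 0 (-1) * (p0 xi N rho mu V Sg) ^ 2.
Proof. intros HZ. unfold LB, Fm, vhatL, shatL. cbn [Nat.eqb]. unfold p0. field. lra. Qed.

Lemma right_bnd : 0 < Zs xi N rho mu (K - 1) 1 ->
  RB (K - 1) = - ((Gp xi N K rho mu rL alpha V Sg (K - 1)) ^ 2 / Zs xi N rho mu (K - 1) 1)
     - (1 - rL ^ 2) / Zs xi N rho mu (K - 1) 1 * (qL xi N K rho mu V Sg) ^ 2.
Proof. intros HZ. unfold RB, Gp, vhatR, shatR. rewrite Nat.eqb_refl. unfold qL. field. lra. Qed.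

Lemma iface_lem k : (k < K - 1)%nat -> 0 < Zs xi N rho mu k 1 -> 0 < Zs xi N rho mu (S k) (-1) ->
  (forall a, alpha (S k) = Some a -> 0 <= a) ->
  RB k + LB (S k) = - ((Gp xi N K rho mu rL alpha V Sg k) ^ 2 / Zs xi N rho mu k 1
     + (Fm xi N rho mu r0 alpha V Sg (S k)) ^ 2 / Zs xi N rho mu (S k) (-1))
     - fric xi N rho mu alpha V Sg (S k).
Proof. intros Hk HA HB Ha.
assert (Hne : Nat.eqb k (K - 1) = false) by (apply Nat.eqb_neq; lia).
unfold RB, LB, Gp, Fm, vhatR, shatR, vhatL, shatL, fric, sighat. rewrite Hne. cbn [Nat.eqb].
unfold Phi, eta, qm, pp, Zm, Zp. replace (S k - 1)%nat with k by lia.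
set (A := Zs xi N rho mu k 1). set (B := Zs xi N rho mu (S k) (-1)).
assert (HA' : 0 < A) by exact HA. assert (HB' : 0 < B) by exact HB.
destruct (alpha (S k)) as [a|].
- assert (0 <= a) by auto.
  assert (A * B / (A + B) > 0). { apply Rdiv_lt_0_compat; [apply Rmult_lt_0_compat|]; lra. }
  assert (0 < A * B) by (apply Rmult_lt_0_compat; lra).
  assert (0 <= a * (A + B)) by (apply Rmult_le_pos; lra).
  field. repeat split; lra.
- field; repeat split; lra.
Qed.
End Alg.

Lemma div_nonneg a b : 0 <= a -> 0 < b -> 0 <= a / b.
Proof. intros; unfold Rdiv; apply Rmult_le_pos; [auto| left; apply Rinv_0_lt_compat; auto]. Qed.

Lemma elem_lin n (a b X Y e1 eN : nat -> R) F G F' G' :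
  sumR n (fun j => a j * (X j - e1 j * F - eN j * G) + b j * (Y j + e1 j * F' - eN j * G')) =
  sumR n (fun j => a j * X j) + sumR n (fun j => b j * Y j) - F * sumR n (fun j => a j * e1 j)
  - G * sumR n (fun j => a j * eN j) + F' * sumR n (fun j => b j * e1 j)
  - G' * sumR n (fun j => b j * eN j).
Proof. induction n; simpl; [ring|]. rewrite IHn; ring. Qed.

Lemma sumR_negsub n (X Y : nat -> R) : sumR n (fun k => - X k - Y k) = - sumR n X - sumR n Y.
Proof. induction n; simpl; [ring|]. rewrite IHn; ring. Qed.

Theorem theorem2
  (N K : nat) (xi w : nat -> R) (Lp : nat -> R -> R) (Lx : R) (x : nat -> R)
  (rho mu : nat -> nat -> R) (r0 rL : R) (alpha : nat -> option R)
  (v sg dv dsg : nat -> nat -> R -> R) :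
  (1 <= N)%nat ->
  (forall i, (i < N)%nat -> xi i < xi (S i)) ->
  -1 <= xi 0%nat -> xi N <= 1 ->
  (forall i, (i <= N)%nat -> 0 < w i) ->
  (* exactness of the quadrature for polynomials of degree <= 2N-1 *)
  (forall (c : nat -> R) (f : R -> R) (pr : Riemann_integrable f (-1) 1),
     (forall s, f s = sumR (2 * N) (fun m => c m * s ^ m)) ->
     sumR (S N) (fun i => w i * f (xi i)) = RiemannInt pr) ->
  (* Lp j is the derivative of the Lagrange polynomial L_j *)
  (forall j s, derivable_pt_lim (lag xi N j) s (Lp j s)) ->
  (* mesh of [0, Lx] *)
  (1 <= K)%nat -> x 0%nat = 0 -> x K = Lx ->
  (forall k, (k < K)%nat -> x k < x (S k)) ->
  (* material parameters *)
  (forall k j, (k < K)%nat -> (j <= N)%nat -> 0 < rho k j /\ 0 < mu k j) ->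
  (forall k, (k < K)%nat ->
     0 < interp xi N (rho k) (-1) /\ 0 < interp xi N (rho k) 1 /\
     0 < interp xi N (mu k) (-1) /\ 0 < interp xi N (mu k) 1) ->
  -1 <= r0 <= 1 -> -1 <= rL <= 1 ->
  (forall k a, (1 <= k)%nat -> (k < K)%nat -> alpha k = Some a -> 0 <= a) ->
  (* differentiability of the unknowns *)
  (forall k j t, (k < K)%nat -> (j <= N)%nat ->
     derivable_pt_lim (v k j) t (dv k j t) /\
     derivable_pt_lim (sg k j) t (dsg k j t)) ->
  (* the semi-discrete DG scheme, componentwise *)
  (forall k j t, (k < K)%nat -> (j <= N)%nat ->
     let V := fun k' j' => v k' j' t in
     let Sg := fun k' j' => sg k' j' t in
     (x (S k) - x k) / 2 * (w j * rho k j) * dv k j t =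
       sumR (S N) (fun i => QN xi w N Lp j i * sg k i t)
       - lag xi N j (-1) * Fm xi N rho mu r0 alpha V Sg k
       - lag xi N j 1 * Gp xi N K rho mu rL alpha V Sg k
     /\
     (x (S k) - x k) / 2 * (w j / mu k j) * dsg k j t =
       sumR (S N) (fun i => QN xi w N Lp j i * v k i t)
       + lag xi N j (-1) * (Fm xi N rho mu r0 alpha V Sg k / Zs xi N rho mu k (-1))
       - lag xi N j 1 * (Gp xi N K rho mu rL alpha V Sg k / Zs xi N rho mu k 1)) ->
  forall t,
    let V := fun k' j' => v k' j' t in
    let Sg := fun k' j' => sg k' j' t in
    let D :=
      - sumR K (fun k =>
          (Fm xi N rho mu r0 alpha V Sg k) ^ 2 / Zs xi N rho mu k (-1)
          + (Gp xi N K rho mu rL alpha V Sg k) ^ 2 / Zs xi N rho mu k 1)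
      - sumR (K - 1) (fun k => fric xi N rho mu alpha V Sg (S k))
      - (1 - r0 ^ 2) / Zs xi N rho mu 0 (-1) * (p0 xi N rho mu V Sg) ^ 2
      - (1 - rL ^ 2) / Zs xi N rho mu (K - 1) 1 * (qL xi N K rho mu V Sg) ^ 2 in
    derivable_pt_lim
      (fun t' => energy N K w x rho mu (fun k j => v k j t') (fun k j => sg k j t'))
      t D
    /\ D <= 0.
Proof.
intros HN Hxi Hx0 HxN Hw Hq HL HK Hx0' HxK Hx Hrm Hint Hr0 HrL Hal Hdiff Hs t.
cbv zeta. cbv zeta in Hs.
assert (HZ1 : forall k, (k < K)%nat -> 0 < Zs xi N rho mu k 1).
{ intros k Hk. unfold Zs. apply sqrt_lt_R0. destruct (Hint k Hk) as [h1 [h2 [h3 h4]]].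
  apply Rmult_lt_0_compat; auto. }
assert (HZm : forall k, (k < K)%nat -> 0 < Zs xi N rho mu k (-1)).
{ intros k Hk. unfold Zs. apply sqrt_lt_R0. destruct (Hint k Hk) as [h1 [h2 [h3 h4]]].
  apply Rmult_lt_0_compat; auto. }
assert (HE : forall k, (k < K)%nat ->
  (x (S k) - x k) / 2 * sumR (S N) (fun j => w j / 2 *
     (rho k j * (2 * v k j t * dv k j t) + / mu k j * (2 * sg k j t * dsg k j t)))
  = LB xi N rho mu r0 alpha (fun k' j' => v k' j' t) (fun k' j' => sg k' j' t) k
    + RB xi N K rho mu rL alpha (fun k' j' => v k' j' t) (fun k' j' => sg k' j' t) k).
{ intros k Hk. rewrite sumR_scal.
  transitivity (sumR (S N) (fun j => v k j t * ((x (S k) - x k) / 2 * (w j * rho k j) * dv k j t)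
     + sg k j t * ((x (S k) - x k) / 2 * (w j / mu k j) * dsg k j t))).
  { apply sumR_ext_lt; intros j Hj. destruct (Hrm k j Hk ltac:(lia)). field. lra. }
  transitivity (sumR (S N) (fun j =>
     v k j t * (sumR (S N) (fun i => QN xi w N Lp j i * sg k i t)
       - lag xi N j (-1) * Fm xi N rho mu r0 alpha (fun k' j' => v k' j' t) (fun k' j' => sg k' j' t) k
       - lag xi N j 1 * Gp xi N K rho mu rL alpha (fun k' j' => v k' j' t) (fun k' j' => sg k' j' t) k)
     + sg k j t * (sumR (S N) (fun i => QN xi w N Lp j i * v k i t)
       + lag xi N j (-1) * (Fm xi N rho mu r0 alpha (fun k' j' => v k' j' t) (fun k' j' => sg k' j' t) k / Zs xi N rho mu k (-1))
       - lag xi N j 1 * (Gp xi N K rho mu rL alpha (fun k' j' => v k' j' t) (fun k' j' => sg k' j' t) k / Zs xi N rho mu k 1)))).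
  { apply sumR_ext_lt; intros j Hj. destruct (Hs k j t Hk ltac:(lia)) as [E1 E2].
    rewrite E1, E2. reflexivity. }
  rewrite elem_lin.
  pose proof (sbp xi w N Lp HN Hq HL (fun j => v k j t) (fun j => sg k j t)) as Hsb.
  cbv beta in Hsb. rewrite Hsb.
  unfold LB, RB, vtr, str, interp. cbv beta. ring. }
assert (Hder : derivable_pt_lim
      (fun t' => energy N K w x rho mu (fun k j => v k j t') (fun k j => sg k j t')) t
      (sumR K (fun k => (x (S k) - x k) / 2 * sumR (S N) (fun j => w j / 2 *
         (rho k j * (2 * v k j t * dv k j t) + / mu k j * (2 * sg k j t * dsg k j t)))))).
{ unfold energy.
  apply (dl_sum K (fun k t' => (x (S k) - x k) / 2 * sumR (S N) (fun j => w j / 2 *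
      (rho k j * (v k j t') ^ 2 + / mu k j * (sg k j t') ^ 2)))).
  intros k Hk. apply dl_scal.
  apply (dl_sum (S N) (fun j t' => w j / 2 * (rho k j * (v k j t') ^ 2 + / mu k j * (sg k j t') ^ 2))).
  intros j Hj. destruct (Hdiff k j t Hk ltac:(lia)) as [D1 D2].
  apply dl_scal. apply dl_plus; apply dl_scal; apply dl_sq; auto. }
set (VV := fun k' j' => v k' j' t) in *. set (SS := fun k' j' => sg k' j' t) in *.
assert (Hfr : forall k, (k < K - 1)%nat -> 0 <= fric xi N rho mu alpha VV SS (S k)).
{ intros k Hk. unfold fric. destruct (alpha (S k)) as [a|] eqn:Ea; [|lra].
  assert (0 <= a) by (apply (Hal (S k)); auto; lia).
  assert (0 < eta xi N rho mu (S k)).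
  { unfold eta, Zm, Zp. replace (S k - 1)%nat with k by lia.
    assert (0 < Zs xi N rho mu k 1) by (apply HZ1; lia).
    assert (0 < Zs xi N rho mu (S k) (-1)) by (apply HZm; lia).
    apply Rdiv_lt_0_compat; [apply Rmult_lt_0_compat|]; lra. }
  apply Rmult_le_pos. apply div_nonneg; [lra|]. apply pow_lt; lra. apply pow2_ge_0. }
assert (Heq : sumR K (fun k => (x (S k) - x k) / 2 * sumR (S N) (fun j => w j / 2 *
         (rho k j * (2 * v k j t * dv k j t) + / mu k j * (2 * sg k j t * dsg k j t))))
  = - sumR K (fun k =>
          (Fm xi N rho mu r0 alpha VV SS k) ^ 2 / Zs xi N rho mu k (-1)
          + (Gp xi N K rho mu rL alpha VV SS k) ^ 2 / Zs xi N rho mu k 1)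
      - sumR (K - 1) (fun k => fric xi N rho mu alpha VV SS (S k))
      - (1 - r0 ^ 2) / Zs xi N rho mu 0 (-1) * (p0 xi N rho mu VV SS) ^ 2
      - (1 - rL ^ 2) / Zs xi N rho mu (K - 1) 1 * (qL xi N K rho mu VV SS) ^ 2).
{ transitivity (sumR K (fun k => LB xi N rho mu r0 alpha VV SS k + RB xi N K rho mu rL alpha VV SS k)).
  { apply sumR_ext_lt; exact HE. }
  rewrite (sumR_LR K (LB xi N rho mu r0 alpha VV SS) (RB xi N K rho mu rL alpha VV SS) HK).
  rewrite left_bnd by (apply HZm; lia). rewrite right_bnd by (apply HZ1; lia).
  pose proof (sumR_LR K (fun k => (Fm xi N rho mu r0 alpha VV SS k) ^ 2 / Zs xi N rho mu k (-1))
     (fun k => (Gp xi N K rho mu rL alpha VV SS k) ^ 2 / Zs xi N rho mu k 1) HK) as H1.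
  cbv beta in H1. rewrite H1.
  rewrite (sumR_ext_lt (K - 1) _ (fun k =>
     - ((Gp xi N K rho mu rL alpha VV SS k) ^ 2 / Zs xi N rho mu k 1
        + (Fm xi N rho mu r0 alpha VV SS (S k)) ^ 2 / Zs xi N rho mu (S k) (-1))
     - fric xi N rho mu alpha VV SS (S k))).
  2:{ intros k Hk. apply iface_lem; auto. apply HZ1; lia. apply HZm; lia.
      intros a Ha. apply (Hal (S k)); auto; lia. }
  rewrite (sumR_negsub (K - 1) (fun k => (Gp xi N K rho mu rL alpha VV SS k) ^ 2 / Zs xi N rho mu k 1
        + (Fm xi N rho mu r0 alpha VV SS (S k)) ^ 2 / Zs xi N rho mu (S k) (-1))
     (fun k => fric xi N rho mu alpha VV SS (S k))).
  ring. }
split.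
- rewrite <- Heq. exact Hder.
- assert (0 <= sumR K (fun k =>
          (Fm xi N rho mu r0 alpha VV SS k) ^ 2 / Zs xi N rho mu k (-1)
          + (Gp xi N K rho mu rL alpha VV SS k) ^ 2 / Zs xi N rho mu k 1)).
  { apply sumR_nonneg; intros k Hk. assert (0 < Zs xi N rho mu k 1) by auto.
    assert (0 < Zs xi N rho mu k (-1)) by auto.
    apply Rplus_le_le_0_compat; apply div_nonneg; auto; apply pow2_ge_0. }
  assert (0 <= sumR (K - 1) (fun k => fric xi N rho mu alpha VV SS (S k))) by (apply sumR_nonneg; auto).
  assert (0 <= (1 - r0 ^ 2) / Zs xi N rho mu 0 (-1) * (p0 xi N rho mu VV SS) ^ 2).
  { apply Rmult_le_pos; [|apply pow2_ge_0]. apply div_nonneg; [nra|]. apply HZm; lia. }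
  assert (0 <= (1 - rL ^ 2) / Zs xi N rho mu (K - 1) 1 * (qL xi N K rho mu VV SS) ^ 2).
  { apply Rmult_le_pos; [|apply pow2_ge_0]. apply div_nonneg; [nra|]. apply HZ1; lia. }
  lra.
Qed.
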